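(* Let $(Y_k)_{k\ge0}$ be a sequence in $\{0,1\}$, and let $a_0\ge0$, $\eta\in(0,1)$, $p\in(0,1]$, $(\nu_k)_k\in\ell^1_+$, $(\varepsilon_k)_k\in\ell^p_+$. Define $a_{k+1}:=(\eta+\nu_k)^{Y_k}a_k+Y_k\varepsilon_k$ for $k\in\mathbb N_0$, and $C_\nu:=\exp\big(\eta^{-1}\sum_{i=0}^\infty\nu_i\big)$. Then for all $R\ge1$, $k\ge0$ and $q\in[p,1]$, $$a_{k+1}\le C_\nu\Big[a_0+\sum_{j=0}^\infty\varepsilon_j\Big]\quad\text{and}\quad\sum_{k=0}^{R-1}Y_ka_{k+1}^q\le\frac{C_\nu^q}{1-\eta^q}\Big[(\eta a_0)^q+\sum_{j=0}^\infty\varepsilon_j^q\Big].$$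
   Context: $\ell^p_+$ denotes the set of nonnegative sequences $(x_n)_{n\ge0}$ with $\sum_nx_n^p<\infty$. *)

(* Defs.v *)
From Stdlib Require Import Reals.
Open Scope R_scope.

(* Real power x^q for x >= 0 and q > 0, with the convention 0^q = 0
   (Stdlib's Rpower is exp(q ln x), which gives 1 at x = 0). *)
Definition rpow (x q : R) : R := if Rle_dec x 0 then 0 else Rpower x q.

Fixpoint aseq (Y : nat -> nat) (eta : R) (nu eps : nat -> R) (a0 : R) (k : nat) : R :=
  match k with
  | O => a0
  | S k' => (eta + nu k') ^ (Y k') * aseq Y eta nu eps a0 k' + INR (Y k') * eps k'
  end.

(* Main.v *)
Require Import Defs.
From Stdlib Require Import Reals Lra.
Open Scope R_scope.

Lemma exp_le_mono x y : x <= y -> exp x <= exp y.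
Proof. intros [H|H]; [left; apply exp_increasing; auto| subst; lra]. Qed.

Lemma rpow_nonneg x q : 0 <= rpow x q.
Proof. unfold rpow; destruct (Rle_dec x 0); [lra|]. unfold Rpower; left; apply exp_pos. Qed.

Lemma rpow_pos x q : 0 < x -> rpow x q = Rpower x q.
Proof. intros; unfold rpow; destruct (Rle_dec x 0); [lra|auto]. Qed.

Lemma rpow_mult x y q : 0 <= x -> 0 <= y -> rpow (x*y) q = rpow x q * rpow y q.
Proof.
  intros hx hy. destruct hx as [hx|hx]; [|subst; unfold rpow; rewrite Rmult_0_l;
    destruct (Rle_dec 0 0); [lra| lra]].
  destruct hy as [hy|hy]; [|subst; unfold rpow; rewrite Rmult_0_r;
    destruct (Rle_dec 0 0); [lra| lra]].
  rewrite !rpow_pos; auto. symmetry; apply Rpower_mult_distr; auto. apply Rmult_lt_0_compat; auto.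
Qed.

Lemma rpow_le x y q : 0 <= q -> 0 <= x <= y -> rpow x q <= rpow y q.
Proof.
  intros hq [hx hxy]. destruct hx as [hx|hx].
  rewrite !rpow_pos; try lra. apply Rle_Rpower_l; lra.
  subst. unfold rpow at 1. destruct (Rle_dec 0 0); [|lra]. apply rpow_nonneg.
Qed.

Lemma rpow_ge1 x q : 0 <= q -> 1 <= x -> 1 <= rpow x q.
Proof.
  intros hq hx. rewrite rpow_pos by lra. unfold Rpower.
  rewrite <- exp_0. apply exp_le_mono. apply Rmult_le_pos; auto.
  rewrite <- ln_1. destruct hx as [hx|hx]; [left; apply ln_increasing; lra| subst; lra].
Qed.

Lemma rpow_lt1 x q : 0 < q -> 0 < x < 1 -> 0 < rpow x q < 1.
Proof.
  intros hq hx. rewrite rpow_pos by lra. unfold Rpower. split. apply exp_pos.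
  rewrite <- exp_0. apply exp_increasing.
  assert (ln x < 0). { rewrite <- ln_1. apply ln_increasing; lra. }
  nra.
Qed.

Lemma rpow_ge_id t q : 0 < q <= 1 -> 0 < t <= 1 -> t <= rpow t q.
Proof.
  intros hq ht. rewrite rpow_pos by lra. unfold Rpower.
  rewrite <- (exp_ln t) at 1 by lra. apply exp_le_mono.
  assert (ln t <= 0). { rewrite <- ln_1. destruct ht as [h0 [h|h]];
    [left; apply ln_increasing; lra| subst; lra]. }
  nra.
Qed.

Lemma rpow_subadd x y q : 0 < q <= 1 -> 0 <= x -> 0 <= y ->
  rpow (x + y) q <= rpow x q + rpow y q.
Proof.
  intros hq hx hy.
  destruct hx as [hx|hx]; [|subst; rewrite Rplus_0_l; unfold rpow at 2;
    destruct (Rle_dec 0 0); lra].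
  destruct hy as [hy|hy]; [|subst; rewrite Rplus_0_r; unfold rpow at 3;
    destruct (Rle_dec 0 0); lra].
  set (s := x + y).
  assert (hs : 0 < s) by (unfold s; lra).
  assert (ex : x = s * (x / s)) by (field; lra).
  assert (ey : y = s * (y / s)) by (field; lra).
  assert (h1 : x / s <= rpow (x / s) q).
  { apply rpow_ge_id; auto. split. apply Rdiv_lt_0_compat; lra.
    apply Rmult_le_reg_r with s; auto. unfold Rdiv. rewrite Rmult_assoc, Rinv_l; unfold s; lra. }
  assert (h2 : y / s <= rpow (y / s) q).
  { apply rpow_ge_id; auto. split. apply Rdiv_lt_0_compat; lra.
    apply Rmult_le_reg_r with s; auto. unfold Rdiv. rewrite Rmult_assoc, Rinv_l; unfold s; lra. }
  rewrite ex at 1. rewrite ey at 1.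
  rewrite !rpow_mult; try lra; try (left; apply Rdiv_lt_0_compat; lra).
  assert (hsum : x / s + y / s = 1) by (unfold s; field; lra).
  pose proof (rpow_nonneg s q).
  nra.
Qed.
Fixpoint psum (f : nat -> R) (k : nat) : R :=
  match k with O => 0 | S k' => psum f k' + f k' end.

Lemma psum_sum f n : sum_f_R0 f n = psum f (S n).
Proof. induction n; simpl in *. lra. rewrite IHn. simpl. lra. Qed.

Lemma psum_nonneg f k : (forall i, 0 <= f i) -> 0 <= psum f k.
Proof. intros H; induction k; simpl. lra. pose proof (H k); lra. Qed.

Lemma psum_le_lim f L : (forall i, 0 <= f i) -> infinite_sum f L -> forall k, psum f k <= L.
Proof.
  intros H HS.
  assert (G : forall n, sum_f_R0 f n <= L).
  { apply growing_ineq; auto. intro n; simpl. pose proof (H (S n)); lra. }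
  intros [|k]. simpl. pose proof (G O). simpl in *. pose proof (H O). lra.
  rewrite <- psum_sum. apply G.
Qed.

Theorem lemma3p5
  (Y : nat -> nat) (HY : forall k, Y k = 0%nat \/ Y k = 1%nat)
  (a0 eta p : R) (nu eps : nat -> R)
  (Ha0 : 0 <= a0) (Heta : 0 < eta < 1) (Hp : 0 < p <= 1)
  (Hnu0 : forall k, 0 <= nu k) (Snu : R) (Hnu : infinite_sum nu Snu)
  (Heps0 : forall k, 0 <= eps k)
  (Heps : exists Sp, infinite_sum (fun k => rpow (eps k) p) Sp) :
  let C := exp (/ eta * Snu) in
  forall (N k : nat) (q Se Sq : R),
    (1 <= N)%nat -> p <= q <= 1 ->
    infinite_sum eps Se ->
    infinite_sum (fun j => rpow (eps j) q) Sq ->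
    aseq Y eta nu eps a0 (S k) <= C * (a0 + Se) /\
    sum_f_R0 (fun i => INR (Y i) * rpow (aseq Y eta nu eps a0 (S i)) q) (N - 1)
      <= rpow C q / (1 - rpow eta q) * (rpow (eta * a0) q + Sq).
Proof.
  intros C N k q Se Sq HN Hq HSe HSq.
  set (a := aseq Y eta nu eps a0).
  set (F := fun k => exp (/ eta * psum nu k)).
  assert (Hq0 : 0 < q <= 1) by lra.
  assert (HF1 : forall k, 1 <= F k).
  { intro j; unfold F. rewrite <- exp_0. apply exp_le_mono.
    apply Rmult_le_pos. left; apply Rinv_0_lt_compat; lra. apply psum_nonneg; auto. }
  assert (HFS : forall k, F (S k) = F k * exp (nu k / eta)).
  { intro j; unfold F; simpl. rewrite <- exp_plus. f_equal. unfold Rdiv. ring. }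
  assert (Hg : forall k, eta + nu k <= eta * exp (nu k / eta)).
  { intro j. pose proof (exp_ineq1_le (nu j / eta)).
    assert (eta * (1 + nu j / eta) = eta + nu j) by (field; lra). nra. }
  assert (Hexp1 : forall k, 1 <= exp (nu k / eta)).
  { intro j. pose proof (exp_ineq1_le (nu j / eta)).
    assert (0 <= nu j / eta) by (unfold Rdiv; apply Rmult_le_pos; [auto| left; apply Rinv_0_lt_compat; lra]). lra. }
  assert (Hapos : forall k, 0 <= a k).
  { induction k0; simpl. auto. unfold a in *; simpl.
    destruct (HY k0) as [E|E]; rewrite E; simpl.
    pose proof (Heps0 k0); lra.
    pose proof (Heps0 k0); pose proof (Hnu0 k0).
    apply Rplus_le_le_0_compat; [apply Rmult_le_pos; lra| lra]. }
  assert (Hc1 : forall k, a k <= F k * (a0 + psum eps k)).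
  { induction k0.
    - unfold a, F; simpl. rewrite Rmult_0_r, exp_0. lra.
    - change (a (S k0)) with ((eta + nu k0) ^ (Y k0) * a k0 + INR (Y k0) * eps k0).
      rewrite HFS. simpl psum.
      pose proof (Heps0 k0); pose proof (Hnu0 k0); pose proof (Hapos k0).
      pose proof (HF1 k0); pose proof (Hexp1 k0); pose proof (Hg k0).
      pose proof (psum_nonneg eps k0 Heps0).
      destruct (HY k0) as [E|E]; rewrite E; simpl.
      + assert (F k0 * (a0 + psum eps k0) <= F k0 * exp (nu k0 / eta) * (a0 + psum eps k0)).
        { assert (0 <= (exp (nu k0 / eta) - 1) * (F k0 * (a0 + psum eps k0))).
          { apply Rmult_le_pos; [lra| apply Rmult_le_pos; lra]. }
          nra. }
        assert (0 <= F k0 * exp (nu k0 / eta) * eps k0) by (apply Rmult_le_pos; [nra|lra]).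
        nra.
      + assert ((eta + nu k0) * a k0 <= exp (nu k0 / eta) * (F k0 * (a0 + psum eps k0))).
        { assert (eta + nu k0 <= exp (nu k0 / eta)) by nra. apply Rmult_le_compat; lra. }
        assert (eps k0 <= F k0 * exp (nu k0 / eta) * eps k0).
        { rewrite <- (Rmult_1_l (eps k0)) at 1. apply Rmult_le_compat_r; [lra|nra]. }
        nra. }
  set (eq_ := rpow eta q).
  assert (Heq : 0 < eq_ < 1) by (apply rpow_lt1; lra).
  set (T := fun i => INR (Y i) * rpow (a (S i)) q).
  set (Eq := fun j => rpow (eps j) q).
  assert (Hc2 : forall k, (1 - eq_) * psum T k + eq_ * rpow (a k) q
                          <= rpow (F k) q * (eq_ * rpow a0 q + psum Eq k)).
  { induction k0.
    - assert (F0 : F O = 1) by (unfold F; simpl; rewrite Rmult_0_r; apply exp_0).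
      assert (R1 : rpow 1 q = 1).
      { rewrite rpow_pos by lra. unfold Rpower. rewrite ln_1, Rmult_0_r. apply exp_0. }
      rewrite F0, R1.
      simpl psum. unfold a; simpl. lra.
    - simpl psum. rewrite HFS. rewrite rpow_mult by (pose proof (HF1 k0); pose proof (Hexp1 k0); lra).
      pose proof (rpow_ge1 (F k0) q ltac:(lra) (HF1 k0)) as G1.
      pose proof (rpow_ge1 _ q ltac:(lra) (Hexp1 k0)) as G2.
      pose proof (psum_nonneg T k0) as PT.
      assert (PT' : 0 <= psum T k0).
      { apply PT. intro i; unfold T. apply Rmult_le_pos. apply pos_INR. apply rpow_nonneg. }
      pose proof (psum_nonneg Eq k0 (fun i => rpow_nonneg _ _)) as PE.
      pose proof (rpow_nonneg a0 q) as Pa0.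
      pose proof (rpow_nonneg (eps k0) q) as Pe.
      pose proof (rpow_nonneg (a k0) q) as Pak.
      set (g := rpow (exp (nu k0 / eta)) q) in *.
      set (Fq := rpow (F k0) q) in *.
      assert (HB : 0 <= eq_ * rpow a0 q + psum Eq k0) by nra.
      unfold T at 2. unfold Eq at 2.
      change (a (S k0)) with ((eta + nu k0) ^ (Y k0) * a k0 + INR (Y k0) * eps k0).
      pose proof (Heps0 k0); pose proof (Hnu0 k0); pose proof (Hapos k0).
      destruct (HY k0) as [E|E]; rewrite E; simpl.
      + rewrite Rmult_1_l, Rmult_0_l, Rplus_0_r, Rmult_0_l, Rplus_0_r.
        assert (Fq * (eq_ * rpow a0 q + psum Eq k0) <= Fq * g * (eq_ * rpow a0 q + psum Eq k0)).
        { assert (0 <= (g - 1) * (Fq * (eq_ * rpow a0 q + psum Eq k0))).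
          { apply Rmult_le_pos; [lra| apply Rmult_le_pos; lra]. }
          nra. }
        assert (0 <= Fq * g * rpow (eps k0) q) by (apply Rmult_le_pos; nra).
        nra.
      + rewrite !Rmult_1_l, Rmult_1_r.
        assert (HA : rpow ((eta + nu k0) * a k0 + eps k0) q <= eq_ * g * rpow (a k0) q + Eq k0).
        { eapply Rle_trans. apply rpow_subadd; auto. apply Rmult_le_pos; lra.
          apply Rplus_le_compat_r. unfold eq_, g. pose proof (Hexp1 k0).
          rewrite <- !rpow_mult; try lra.
          2: apply Rmult_le_pos; lra.
          apply rpow_le. lra. split. apply Rmult_le_pos; lra.
          apply Rmult_le_compat_r; auto. }
        assert (J1 : (1 - eq_) * psum T k0 <= g * ((1 - eq_) * psum T k0)).
        { rewrite <- (Rmult_1_l ((1 - eq_) * psum T k0)) at 1. apply Rmult_le_compat_r; nra. }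
        assert (J2 : g * ((1 - eq_) * psum T k0 + eq_ * rpow (a k0) q)
                     <= g * (Fq * (eq_ * rpow a0 q + psum Eq k0))).
        { apply Rmult_le_compat_l; nra. }
        assert (J3 : Eq k0 <= Fq * g * Eq k0).
        { unfold Eq. rewrite <- (Rmult_1_l (rpow (eps k0) q)) at 1.
          apply Rmult_le_compat_r; nra. }
        assert (HeqEq : (1 - eq_) * rpow ((eta + nu k0) * a k0 + eps k0) q
                        + eq_ * rpow ((eta + nu k0) * a k0 + eps k0) q
                        = rpow ((eta + nu k0) * a k0 + eps k0) q) by ring.
        unfold Eq in *. nra. }
  assert (HFC : forall k, F k <= C).
  { intro j; unfold F, C. apply exp_le_mono. apply Rmult_le_compat_l.
    left; apply Rinv_0_lt_compat; lra. apply psum_le_lim; auto. }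
  split.
  - pose proof (Hc1 (S k)). pose proof (HFC (S k)).
    pose proof (psum_le_lim eps Se Heps0 HSe (S k)).
    pose proof (psum_nonneg eps (S k) Heps0). pose proof (HF1 (S k)).
    fold a. eapply Rle_trans. eauto. apply Rmult_le_compat; lra.
  - destruct N as [|N]. inversion HN.
    replace (S N - 1)%nat with N by (simpl; rewrite Nat.sub_0_r; reflexivity).
    fold a. change (fun i => INR (Y i) * rpow (a (S i)) q) with T.
    rewrite psum_sum.
    pose proof (Hc2 (S N)).
    pose proof (rpow_nonneg (a (S N)) q).
    pose proof (psum_le_lim Eq Sq (fun i => rpow_nonneg _ _) HSq (S N)).
    pose proof (psum_nonneg Eq (S N) (fun i => rpow_nonneg _ _)).
    assert (0 <= q) by lra. pose proof (HF1 (S N)). pose proof (HFC (S N)).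
    assert (rpow (F (S N)) q <= rpow C q) by (apply rpow_le; lra).
    pose proof (rpow_ge1 (F (S N)) q ltac:(lra) (HF1 (S N))).
    pose proof (rpow_nonneg a0 q).
    rewrite rpow_mult by lra. fold eq_.
    assert (K : (1 - eq_) * psum T (S N) <= rpow C q * (eq_ * rpow a0 q + Sq)).
    { eapply Rle_trans with (rpow (F (S N)) q * (eq_ * rpow a0 q + psum Eq (S N))).
      nra. apply Rmult_le_compat; nra. }
    unfold Rdiv. rewrite Rmult_assoc, (Rmult_comm (/ _)), <- Rmult_assoc.
    apply Rmult_le_reg_r with (1 - eq_). lra.
    rewrite Rmult_assoc, Rinv_l by lra. lra.
Qed.
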